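(* If $(A_n)_{n=0}^\infty$ is an Appell sequence, then the Wronskian Appell polynomials $(A_\lambda)_{\lambda}$ (indexed by all integer partitions $\lambda$) satisfy \[ F_\lambda^{\vphantom'}A_\lambda' = \lvert \lambda \rvert \sum_{\mu \lessdot \lambda} F_\mu A_\mu, \] where the sum is over all partitions $\mu$ covered by $\lambda$ in Young's lattice, i.e. obtained from $\lambda$ by removing one cell of its diagram.
   Context: An Appell sequence is a sequence of polynomials $(A_n)_{n\ge0}$ with $A_0=1$ and $A_n'=nA_{n-1}$ for $n\ge1$. For a partition $\lambda$ of length $r$, let $(n_1,\dots,n_r)=(\lambda_r,\lambda_{r-1}+1,\dots,\lambda_1+r-1)$ and $A_\lambda=\operatorname{Wr}[A_{n_1},\dots,A_{n_r}]/\Delta(n_1,\dots,n_r)$, where $\operatorname{Wr}$ is the Wronskian and $\Delta(x_1,\dots,x_r)=\prod_{i<j}(x_j-x_i)$; $A_\emptyset=1$. $F_\lambda$ is the number of standard Young tableaux of shape $\lambda$ and $|\lambda|$ its size. *)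

(* Defs.v *)
From HB Require Import structures.
From mathcomp Require Import all_boot all_order all_algebra.
Set Implicit Arguments. Unset Strict Implicit. Unset Printing Implicit Defensive.
Import Order.TTheory GRing.Theory Num.Theory.
Local Open Scope ring_scope.

Definition is_partition (la : seq nat) : bool :=
  sorted geq la && all (fun x => 0 < x)%N la.

Definition psize (la : seq nat) : nat := sumn la.

Definition is_Appell (R : fieldType) (A : nat -> {poly R}) : Prop :=
  A 0%N = 1 /\ forall n : nat, (A n.+1)^`() = n.+1%:R *: A n.

(* (n_1,...,n_r) = (lambda_r, lambda_{r-1}+1, ..., lambda_1 + r - 1),
   0-indexed: n_j = lambda_{r-j} + j  (j = 0..r-1, lambda 0-indexed). *)
Definition nseq_of (la : seq nat) (j : nat) : nat :=
  (nth 0 la (size la - 1 - j) + j)%N.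

Definition wr_mx (R : fieldType) (A : nat -> {poly R}) (la : seq nat)
  : 'M[{poly R}]_(size la) :=
  \matrix_(i < size la, j < size la) (A (nseq_of la j))^`(i).

Definition Delta_n (R : fieldType) (la : seq nat) : R :=
  \prod_(i < size la) \prod_(j < size la | (i < j)%N)
     ((nseq_of la j)%:R - (nseq_of la i)%:R).

(* Wronskian Appell polynomial A_lambda = Wr[A_{n_1},...,A_{n_r}] / Delta.
   For lambda = [::], r = 0, the 0x0 determinant is 1 and Delta = 1. *)
Definition wr_appell (R : fieldType) (A : nat -> {poly R}) (la : seq nat)
  : {poly R} :=
  (Delta_n R la)^-1 *: \det (wr_mx A la).

Definition in_diagram (la : seq nat)
  (c : 'I_(size la) * 'I_(head 0%N la)) : bool :=
  (c.2 < nth 0 la c.1)%N.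

(* A standard Young tableau of shape lambda, viewed as the map
   k |-> cell containing the entry k+1 (k < |lambda|): it is injective,
   lands in the diagram (hence is a bijection onto the diagram), and entries
   increase along rows and down columns, i.e. whenever cell(k) <= cell(l)
   componentwise, k <= l. *)
Definition is_SYT (la : seq nat)
  (T : {ffun 'I_(psize la) -> 'I_(size la) * 'I_(head 0%N la)}) : bool :=
  [&& injectiveb T,
      [forall k, in_diagram (T k)] &
      [forall k, forall l,
         ((T k).1 <= (T l).1)%N && ((T k).2 <= (T l).2)%N ==> (k <= l)%N]].

Definition num_SYT (la : seq nat) : nat := #|[pred T | is_SYT (la := la) T]|.

(* Removing one cell at the end of row i of lambda (before deleting a possible
   resulting zero part). *)
Definition dec_row (la : seq nat) (i : nat) : seq nat :=
  set_nth 0%N la i (nth 0%N la i).-1.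

(* Row i ends in a removable corner iff decrementing it keeps the sequence
   weakly decreasing. *)
Definition removable (la : seq nat) (i : nat) : bool := sorted geq (dec_row la i).

Definition remove_cell (la : seq nat) (i : nat) : seq nat :=
  [seq x <- dec_row la i | (0 < x)%N].

(* Main.v *)
Require Import Defs.
From HB Require Import structures.
From mathcomp Require Import all_boot all_order all_algebra.
From mathcomp Require Import fingroup perm zify ring.
Set Implicit Arguments. Unset Strict Implicit. Unset Printing Implicit Defensive.
Import Order.TTheory GRing.Theory Num.Theory.
Lemma geq_transitive : transitive geq.
Proof. by move=> a b c h1 h2; apply: leq_trans h2 h1. Qed.

Lemma part_nth_pos la x : is_partition la -> x < size la -> 0 < nth 0 la x.
Proof.
by case/andP=> _ /allP h hx; apply: h; apply: mem_nth.
Qed.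

Lemma part_nth_le la x y : is_partition la -> x <= y -> nth 0 la y <= nth 0 la x.
Proof.
case/andP=> hs _ hxy.
case: (ltnP y (size la)) => hy; last by rewrite nth_default.
have hx : x < size la by apply: leq_ltn_trans hy.
by apply: (sorted_leq_nth geq_transitive (fun a => leqnn a) 0 hs); rewrite ?inE.
Qed.

Lemma nth_le_head la x : is_partition la -> nth 0 la x <= head 0 la.
Proof. by move=> h; rewrite -nth0; apply: part_nth_le. Qed.

Lemma diag_size la c : (c.2 < nth 0 la c.1)%N -> c.1 < size la.
Proof.
by move=> h; case: ltnP => // hs; rewrite nth_default in h.
Qed.

Lemma nth_dec la i x :
  nth 0 (dec_row la i) x = if x == i then (nth 0 la i).-1 else nth 0 la x.
Proof. by rewrite /dec_row nth_set_nth. Qed.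

Lemma size_dec la i : i < size la -> size (dec_row la i) = size la.
Proof. by move=> h; rewrite /dec_row size_set_nth; apply/maxn_idPr. Qed.

Lemma removableE la i : is_partition la -> i < size la ->
  removable la i = (nth 0 la i.+1 < nth 0 la i).
Proof.
move=> hp hi; have hpos := part_nth_pos hp hi.
have hsort : sorted geq la by case/andP: hp.
apply/idP/idP.
- move=> /(sortedP 0) h.
  case: (ltnP i.+1 (size la)) => hi1; last by rewrite nth_default.
  have := h i; rewrite size_dec // => /(_ hi1); rewrite !nth_dec eqxx.
  rewrite (_ : (i.+1 == i) = false); last by apply/negbTE; rewrite neq_ltn ltnSn orbT.
  by move=> /= hle; apply: leq_ltn_trans hle _; rewrite prednK.
- move=> hlt; apply/(sortedP 0) => k; rewrite size_dec // => hk.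
  rewrite !nth_dec /=.
  have hk0 := (elimT (sortedP 0) hsort k hk).
  case: (eqVneq k i) => [->|hki]; first by rewrite (_ : (i.+1 == i) = false) /=;
     [rewrite -ltnS prednK | apply/negbTE; rewrite neq_ltn ltnSn orbT].
  case: (eqVneq k.+1 i) => [hk1|hk1] //=.
  by apply: leq_trans (leq_pred _) _; rewrite -hk1.
Qed.

Lemma nth_filter_pos s x : sorted geq s ->
  nth 0 [seq y <- s | 0 < y] x = nth 0 s x.
Proof.
elim: s x => [|a s IH] x //= hs.
have hs' : sorted geq s by apply: path_sorted hs.
case: (posnP a) => [a0|apos] /=.
- have hall : all (geq a) s by exact: (order_path_min geq_transitive hs).
  have hz : forall y, y \in a :: s -> y = 0.
    move=> y; rewrite inE => /orP[/eqP -> //|hy].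
    by have := allP hall y hy; rewrite /= a0 leqn0 => /eqP.
  have -> : [seq y <- s | 0 < y] = [::].
    rewrite (@eq_in_filter _ _ pred0) ?filter_pred0 // => y hy.
    by rewrite (hz y) // inE hy orbT.
  rewrite a0 /=; case: x => // x; rewrite nth_nil /=.
  case: (ltnP x (size s)) => hx; last by rewrite nth_default.
  by rewrite (hz (nth 0 s x)) // inE mem_nth ?orbT.
- by case: x => //= x; apply: IH.
Qed.

Lemma nth_remove la i x : removable la i ->
  nth 0 (remove_cell la i) x = if x == i then (nth 0 la i).-1 else nth 0 la x.
Proof. by move=> hr; rewrite /remove_cell nth_filter_pos // nth_dec. Qed.

Lemma remove_part la i : removable la i -> is_partition (remove_cell la i).
Proof.
move=> hr; rewrite /is_partition /remove_cell sorted_filter //.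
  by rewrite filter_all.
exact: geq_transitive.
Qed.

Lemma sumn_filter_pos s : sumn [seq y <- s | 0 < y] = sumn s.
Proof. by elim: s => //= a s IH; case: (posnP a) => [->|_] /=; rewrite IH. Qed.

Lemma psize_remove la i : is_partition la -> i < size la ->
  psize (remove_cell la i) = (psize la).-1.
Proof.
move=> hp hi; have hpos := part_nth_pos hp hi.
rewrite /psize /remove_cell sumn_filter_pos /dec_row sumn_set_nth0.
have : nth 0 la i <= sumn la.
  elim: la i {hp hi hpos} => [|a s IH] [|i] //=; first exact: leq_addr.
  by apply: leq_trans (IH i) _; rewrite leq_addl.
lia.
Qed.

Lemma size_remove_le la i : i < size la -> size (remove_cell la i) <= size la.
Proof.
by move=> hi; rewrite /remove_cell size_filter -(size_dec hi) count_size.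
Qed.

Lemma head_remove_le la i : removable la i -> head 0 (remove_cell la i) <= head 0 la.
Proof.
move=> hr; rewrite -!nth0 nth_remove //; case: ifP => [/eqP <-|_] //; exact: leq_pred.
Qed.

Lemma nth_remove_le la i x : removable la i -> nth 0 (remove_cell la i) x <= nth 0 la x.
Proof.
move=> hr; rewrite nth_remove //; case: eqP => [->|] //; exact: leq_pred.
Qed.

Definition ext (g : nat -> nat * nat) n c := fun k => if k == n then c else g k.

Definition sytF la n (g : nat -> nat * nat) : bool :=
 [&& [forall k : 'I_n, ((g k).2 < nth 0 la (g k).1)%N],
     [forall k : 'I_n, forall l : 'I_n, (g k == g l) ==> (nat_of_ord k == l)] &
     [forall k : 'I_n, forall l : 'I_n,
        (((g k).1 <= (g l).1) && ((g k).2 <= (g l).2)) ==> (k <= l)]].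

Lemma sytFP la n g : reflect
  ((forall k, k < n -> (g k).2 < nth 0 la (g k).1) /\
   (forall k l, k < n -> l < n -> g k = g l -> k = l) /\
   (forall k l, k < n -> l < n -> (g k).1 <= (g l).1 -> (g k).2 <= (g l).2 -> k <= l))
  (sytF la n g).
Proof.
apply: (iffP and3P) => [[/forallP h1 /forallP h2 /forallP h3]|[h1 [h2 h3]]].
  split; first by move=> k hk; exact: (h1 (Ordinal hk)).
  split.
    move=> k l hk hl e; have := forallP (h2 (Ordinal hk)) (Ordinal hl).
    by rewrite /= e eqxx => /eqP.
  move=> k l hk hl e1 e2; have := forallP (h3 (Ordinal hk)) (Ordinal hl).
  by rewrite /= e1 e2.
split; apply/forallP => k; first exact: h1 k (ltn_ord k).
  apply/forallP => l; apply/implyP => /eqP e; apply/eqP.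
  exact: h2 _ _ (ltn_ord k) (ltn_ord l) e.
apply/forallP => l; apply/implyP => /andP[e1 e2].
exact: h3 _ _ (ltn_ord k) (ltn_ord l) e1 e2.
Qed.

Definition diagl la := [seq (i, j) | i <- iota 0 (size la), j <- iota 0 (nth 0 la i)].

Lemma mem_diagl la c : (c \in diagl la) = (c.2 < nth 0 la c.1).
Proof.
apply/allpairsPdep/idP => [[i [j [hi hj ->]]]|h] /=.
  by rewrite mem_iota in hj.
exists c.1, c.2; rewrite !mem_iota /= h (diag_size h); split => //.
by case: c {h}.
Qed.

Lemma size_diagl la : size (diagl la) = sumn la.
Proof.
rewrite size_allpairs_dep.
rewrite (eq_map (fun i => size_iota 0 (nth 0 la i))).
by rewrite -/(mkseq _ _) mkseq_nth.
Qed.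

Lemma uniq_diagl la : uniq (diagl la).
Proof.
apply: allpairs_uniq_dep; first exact: iota_uniq.
  by move=> x _; exact: iota_uniq.
by move=> [x1 y1] [x2 y2] _ _ /= [e1 e2]; subst.
Qed.

Lemma syt_surj la n g d : sytF la n g -> n = psize la ->
  d.2 < nth 0 la d.1 -> exists2 k, k < n & g k = d.
Proof.
move=> /sytFP [h1 [h2 _]] hn hd.
have us : uniq (map g (iota 0 n)).
  rewrite map_inj_in_uniq ?iota_uniq // => k l; rewrite !mem_iota /= => hk hl.
  exact: h2.
have sub : {subset map g (iota 0 n) <= diagl la}.
  move=> x /mapP [k]; rewrite mem_iota /= => hk ->; rewrite mem_diagl; exact: h1.
have hsz : size (diagl la) <= size (map g (iota 0 n)).
  by rewrite size_diagl size_map size_iota hn.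
have [_ eqs] := uniq_min_size us sub hsz.
have : d \in map g (iota 0 n) by rewrite eqs mem_diagl.
by case/mapP => k; rewrite mem_iota /= => hk ->; exists k.
Qed.

Lemma ext_n g n c : ext g n c n = c.
Proof. by rewrite /ext eqxx. Qed.

Lemma ext_lt g n c k : k < n -> ext g n c k = g k.
Proof. by move=> hk; rewrite /ext (_ : (k == n) = false) //; apply/negbTE; rewrite ltn_eqF. Qed.

Lemma ext_ne g n c k : k != n -> ext g n c k = g k.
Proof. by move=> hk; rewrite /ext (negbTE hk). Qed.

Lemma key la n g c : is_partition la -> psize la = n.+1 ->
  sytF la n.+1 (ext g n c) =
  [&& c.1 < size la, removable la c.1, c.2.+1 == nth 0 la c.1 &
      sytF (remove_cell la c.1) n g].
Proof.
move=> hp hps; case: c => i j /=.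
apply/idP/idP.
- move=> hS; have /sytFP [h1 [h2 h3]] := hS.
  have hc : j < nth 0 la i by have := h1 n (ltnSn n); rewrite ext_n.
  have hi : i < size la := diag_size (c := (i, j)) hc.
  have hj : j.+1 = nth 0 la i.
    apply/eqP; rewrite eqn_leq hc /= leqNgt; apply/negP => hlt.
    have [k hk e] := @syt_surj la n.+1 _ (i, j.+1) hS (esym hps) hlt.
    have := h3 n k (ltnSn n) hk; rewrite ext_n e /= => /(_ (leqnn _) (leqnSn _)) hnk.
    have hk' : k = n by lia.
    by move: e; rewrite hk' ext_n => -[] ?; lia.
  have hrem : removable la i.
    rewrite removableE // ltnNge; apply/negP => hle.
    have hd : j < nth 0 la i.+1 by apply: leq_trans hc hle.
    have [k hk e] := @syt_surj la n.+1 _ (i.+1, j) hS (esym hps) hd.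
    have := h3 n k (ltnSn n) hk; rewrite ext_n e /= => /(_ (leqnSn _) (leqnn _)) hnk.
    have hk' : k = n by lia.
    by move: e; rewrite hk' ext_n => -[] ?; lia.
  rewrite hi hrem hj eqxx /=.
  apply/sytFP; split; last split.
  + move=> k hk; have := h1 k (ltnW hk); rewrite ext_lt // nth_remove //.
    case: eqP => [e|//]; rewrite -hj /= => hlt.
    have hne : g k != (i, j).
      apply/eqP => e'; have := h2 k n (ltnW hk) (ltnSn n); rewrite ext_lt // ext_n.
      by move=> /(_ e'); lia.
    move: hne; case: (g k) e hlt => a b /= -> hb; rewrite /eq_op /= eqxx /= => hbj.
    have : b != j by [].
    lia.
  + move=> k l hk hl e; apply: (h2 k l (ltnW hk) (ltnW hl)).
    by rewrite !ext_lt.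
  + move=> k l hk hl e1 e2; apply: (h3 k l (ltnW hk) (ltnW hl)); by rewrite !ext_lt.
- case/and4P => hi hrem /eqP hj hS'; have /sytFP [h1 [h2 h3]] := hS'.
  have hmu : nth 0 (remove_cell la i) i = j by rewrite nth_remove // eqxx -hj.
  apply/sytFP; split; last split.
  + move=> k hk; case: (ltnP k n) => hkn.
      rewrite ext_lt //; apply: leq_trans (h1 k hkn) _; exact: nth_remove_le.
    have -> : k = n by lia.
    by rewrite ext_n /= -hj.
  + have nc : forall l, l < n -> g l <> (i, j).
      by move=> l hl e; have := h1 l hl; rewrite e /= hmu ltnn.
    move=> k l hk hl; case: (ltnP k n) => hkn; case: (ltnP l n) => hln.
    * by rewrite !ext_lt //; apply: h2.
    * have -> : l = n by lia.
      by rewrite ext_lt // ext_n => /nc.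
    * have -> : k = n by lia.
      by rewrite ext_n ext_lt // => /esym /nc.
    * lia.
  + move=> k l hk hl; case: (ltnP l n) => hln; last by lia.
    case: (ltnP k n) => hkn.
      by rewrite !ext_lt //; apply: h3.
    have -> : k = n by lia.
    rewrite ext_n ext_lt //= => hil hjl.
    have := h1 l hln; rewrite nth_remove //.
    case: eqP => [e|ne].
      by rewrite -hj /=; lia.
    have hlt : i < (g l).1 by rewrite ltn_neqAle hil andbT; apply/eqP => e; apply: ne.
    have := part_nth_le hp hlt; rewrite removableE // in hrem.
    lia.
Qed.

Definition view n a b (T : {ffun 'I_n -> 'I_a * 'I_b}) : nat -> nat * nat :=
  fun k => match (insub k : option 'I_n) with
           | Some k' => (nat_of_ord (T k').1, nat_of_ord (T k').2)
           | None => (0, 0) end.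

Lemma viewE n a b (T : {ffun 'I_n -> 'I_a * 'I_b}) (k : 'I_n) :
  view T k = (nat_of_ord (T k).1, nat_of_ord (T k).2).
Proof. by rewrite /view valK. Qed.

Lemma view_out n a b (T : {ffun 'I_n -> 'I_a * 'I_b}) k : n <= k -> view T k = (0, 0).
Proof. by move=> hk; rewrite /view insubF // ltnNge hk. Qed.

Lemma card_bij (A B : finType) (f : A -> B) (PA : pred A) (PB : pred B) :
  injective f -> (forall x, PA x -> PB (f x)) ->
  (forall y, PB y -> exists2 x, PA x & f x = y) -> #|PA| = #|PB|.
Proof.
move=> finj hAB hBA.
have -> : #|PA| = #|[set x | PA x]| by apply: eq_card => x; rewrite inE.
rewrite -(@card_in_imset _ _ f [set x | PA x]); last by move=> x y _ _; apply: finj.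
apply: eq_card => y; rewrite [y \in PB]/=.
apply/imsetP/idP => [[x]|hy]; first by rewrite inE => hx ->; apply: hAB.
by have [x hx <-] := hBA y hy; exists x; rewrite ?inE.
Qed.

Lemma sytF_ext la n g g' : (forall k, k < n -> g k = g' k) -> sytF la n g = sytF la n g'.
Proof.
move=> e; apply/sytFP/sytFP => [[h1 [h2 h3]]|[h1 [h2 h3]]]; (split; last split).
- by move=> k hk; rewrite -e //; apply: h1.
- by move=> k l hk hl; rewrite -!e //; apply: h2.
- by move=> k l hk hl; rewrite -!e //; apply: h3.
- by move=> k hk; rewrite e //; apply: h1.
- by move=> k l hk hl; rewrite !e //; apply: h2.
- by move=> k l hk hl; rewrite !e //; apply: h3.
Qed.

Lemma box_change n a b M (P : (nat -> nat * nat) -> bool) (ha : a <= M) (hb : b <= M) :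
  (forall g g', (forall k, k < n -> g k = g' k) -> P g = P g') ->
  (forall g, P g -> forall k, k < n -> (g k).1 < a /\ (g k).2 < b) ->
  #|[pred T : {ffun 'I_n -> 'I_a * 'I_b} | P (view T)]| =
  #|[pred T : {ffun 'I_n -> 'I_M * 'I_M} | P (view T)]|.
Proof.
move=> Pext Pbd.
pose f (T : {ffun 'I_n -> 'I_a * 'I_b}) : {ffun 'I_n -> 'I_M * 'I_M} :=
  [ffun k => (widen_ord ha (T k).1, widen_ord hb (T k).2)].
have vf : forall T, view (f T) =1 view T.
  by move=> T k; rewrite /view; case: insub => // k'; rewrite ffunE.
apply: (@card_bij _ _ f).
- move=> T1 T2 e; apply/ffunP => k; have := congr1 (fun F : {ffun 'I_n -> 'I_M * 'I_M} => F k) e.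
  rewrite !ffunE => -[e1 e2]; move: e1 e2; case: (T1 k) => x1 y1; case: (T2 k) => x2 y2 /=.
  by move=> /val_inj -> /val_inj ->.
- by move=> T /=; rewrite (Pext _ (view T)) // => k _; rewrite vf.
- move=> y /= hy.
  case: (posnP n) => [n0|npos].
    have T0 : {ffun 'I_n -> 'I_a * 'I_b} by apply: ffun0; rewrite card_ord n0.
    exists T0.
      by rewrite /= (Pext _ (view y)) // => k hk; exfalso; move: hk; rewrite n0.
    by apply/ffunP => -[k hk]; exfalso; move: hk; rewrite n0.
  have [a0 b0] : 0 < a /\ 0 < b.
    by have [h1 h2] := Pbd _ hy 0 npos; split; [apply: leq_ltn_trans h1|apply: leq_ltn_trans h2].
  exists [ffun k => (insubd (Ordinal a0) (nat_of_ord (y k).1),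
                     insubd (Ordinal b0) (nat_of_ord (y k).2))].
    rewrite /= (Pext _ (view y)) // => k hk.
    have [h1 h2] := Pbd _ hy k hk.
    have := viewE y (Ordinal hk); rewrite /= => e; rewrite e in h1 h2.
    by rewrite (viewE _ (Ordinal hk)) e ffunE /= !val_insubd h1 h2.
  apply/ffunP => k; rewrite !ffunE.
  have [h1 h2] := Pbd _ hy k (ltn_ord k); rewrite viewE /= in h1 h2.
  by case: (y k) h1 h2 => x z /= h1 h2; congr pair; apply: val_inj; rewrite /= val_insubd ?h1 ?h2.
Qed.

Lemma split_last n M (P : (nat -> nat * nat) -> bool) :
  (forall g g', (forall k, k < n.+1 -> g k = g' k) -> P g = P g') ->
  #|[pred T : {ffun 'I_n.+1 -> 'I_M * 'I_M} | P (view T)]| =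
  \sum_(c : 'I_M * 'I_M)
     #|[pred T : {ffun 'I_n -> 'I_M * 'I_M} |
          P (ext (view T) n (nat_of_ord c.1, nat_of_ord c.2))]|.
Proof.
move=> Pext.
rewrite -sum1_card (partition_big (fun T : {ffun 'I_n.+1 -> 'I_M * 'I_M} => T ord_max) predT) //=.
apply: eq_bigr => c _; rewrite sum1dep_card.
have -> : #|[set x in [pred T : {ffun 'I_n.+1 -> 'I_M * 'I_M} | P (view T)] | x ord_max == c]|
   = #|[pred T : {ffun 'I_n.+1 -> 'I_M * 'I_M} | P (view T) && (T ord_max == c)]|.
  by apply: eq_card => T; rewrite !inE.
symmetry.
pose g (T : {ffun 'I_n -> 'I_M * 'I_M}) : {ffun 'I_n.+1 -> 'I_M * 'I_M} :=
  [ffun k => if unlift ord_max k is Some k' then T k' else c].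
have vg : forall T, view (g T) =1 ext (view T) n (nat_of_ord c.1, nat_of_ord c.2).
  move=> T k; case: (ltnP k n.+1) => hk; last first.
    rewrite view_out // ext_ne ?view_out //; first exact: ltnW.
    by apply/eqP => e; rewrite e ltnn in hk.
  rewrite (viewE (g T) (Ordinal hk)) ffunE.
  case: unliftP => [k' e|e] /=.
    have ek : k = k'.
      by have := congr1 val e; rewrite /= /bump leqNgt ltn_ord /= add0n.
    by rewrite ek ext_lt ?viewE.
  have ek : k = n by have := congr1 val e.
  by rewrite ek ext_n.
apply: (@card_bij _ _ g).
- move=> T1 T2 e; apply/ffunP => k.
  have := congr1 (fun F : {ffun 'I_n.+1 -> 'I_M * 'I_M} => F (lift ord_max k)) e.
  by rewrite !ffunE liftK.
- move=> T /= hT; apply/andP; split.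
    by rewrite (Pext _ (ext (view T) n (nat_of_ord c.1, nat_of_ord c.2))) // => k _; rewrite vg.
  by rewrite ffunE unlift_none.
- move=> T /= /andP [hT /eqP hc].
  exists [ffun k => T (lift ord_max k)].
    rewrite /= -(Pext (view T)) // => k hk.
    case: (ltnP k n) => hkn.
      rewrite ext_lt // (viewE T (Ordinal hk)) (viewE _ (Ordinal hkn)) ffunE.
      have -> : lift ord_max (Ordinal hkn) = Ordinal hk.
        by apply: val_inj; rewrite /= /bump leqNgt hkn.
      by [].
    have e : k = n by lia.
    rewrite e ext_n (viewE T ord_max) hc; by [].
  apply/ffunP => k; rewrite !ffunE.
  case: unliftP => [k' -> |-> //]; by rewrite ffunE.
Qed.

Lemma is_SYT_sytF la (T : {ffun 'I_(psize la) -> 'I_(size la) * 'I_(head 0 la)}) :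
  is_SYT T = sytF la (psize la) (view T).
Proof.
apply/idP/sytFP.
- case/and3P => /injectiveP hinj /forallP hd /forallP hm; split; last split.
  + move=> k hk; rewrite (viewE T (Ordinal hk)); exact: (hd (Ordinal hk)).
  + move=> k l hk hl; rewrite (viewE T (Ordinal hk)) (viewE T (Ordinal hl)) => -[e1 e2].
    have : T (Ordinal hk) = T (Ordinal hl).
      move: e1 e2; case: (T (Ordinal hk)) => x1 y1; case: (T (Ordinal hl)) => x2 y2 /=.
      by move=> /val_inj -> /val_inj ->.
    by move/hinj => /(congr1 val).
  + move=> k l hk hl; rewrite (viewE T (Ordinal hk)) (viewE T (Ordinal hl)) /= => e1 e2.
    by have := forallP (hm (Ordinal hk)) (Ordinal hl); rewrite /= e1 e2.
- move=> [h1 [h2 h3]]; apply/and3P; split.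
  + apply/injectiveP => k l e; apply: val_inj; apply: h2 (ltn_ord k) (ltn_ord l) _.
    by rewrite !viewE e.
  + by apply/forallP => k; have := h1 k (ltn_ord k); rewrite viewE.
  + apply/forallP => k; apply/forallP => l; apply/implyP => /andP [e1 e2].
    by apply: h3 (ltn_ord k) (ltn_ord l) _ _; rewrite !viewE.
Qed.

Lemma num_SYT_M la M : is_partition la -> size la <= M -> head 0 la <= M ->
  num_SYT la =
  #|[pred T : {ffun 'I_(psize la) -> 'I_M * 'I_M} | sytF la (psize la) (view T)]|.
Proof.
move=> hp ha hb; rewrite /num_SYT.
have -> : #|[pred T | is_SYT (la:=la) T]| =
   #|[pred T : {ffun 'I_(psize la) -> 'I_(size la) * 'I_(head 0 la)} |
          sytF la (psize la) (view T)]|.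
  by apply: eq_card => T; rewrite !inE is_SYT_sytF.
apply: box_change => //; first by move=> g g' e; apply: sytF_ext.
move=> g /sytFP [h1 _] k hk; have := h1 k hk => h; split; first exact: diag_size h.
by apply: leq_trans h (nth_le_head _ hp).
Qed.

Lemma num_SYT_nil : num_SYT [::] = 1.
Proof.
rewrite /num_SYT.
have -> : #|[pred T | is_SYT (la:=[::]) T]| = #|{ffun 'I_0 -> 'I_0 * 'I_0}|.
  apply: eq_card => T; rewrite !inE; apply/and3P; split.
  - by apply/injectiveP => -[].
  - by apply/forallP => -[].
  - by apply/forallP => -[].
by rewrite card_ffun card_ord.
Qed.

Lemma psize_pos la : is_partition la -> la != [::] -> 0 < psize la.
Proof.
case: la => // a s hp _; have := part_nth_pos hp (ltn0Sn _ : 0 < size (a :: s)).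
by rewrite /psize /= => h; apply: leq_trans h (leq_addr _ _).
Qed.

Lemma num_SYT_branch la : is_partition la -> la != [::] ->
  num_SYT la = \sum_(i < size la | removable la i) num_SYT (remove_cell la i).
Proof.
move=> hp hne; set M := size la + head 0 la.
have hMa : size la <= M by apply: leq_addr.
have hMb : head 0 la <= M by apply: leq_addl.
rewrite (num_SYT_M hp hMa hMb).
have := psize_pos hp hne; case hP: (psize la) => [//|n] _.
rewrite split_last; last by move=> g g' e; apply: sytF_ext.
transitivity (\sum_(c : 'I_M * 'I_M) #|[pred T : {ffun 'I_n -> 'I_M * 'I_M} |
   [&& (nat_of_ord c.1) < size la, removable la c.1,
       (nat_of_ord c.2).+1 == nth 0 la c.1 &
       sytF (remove_cell la c.1) n (view T)]]|).
  by apply: eq_bigr => c _; apply: eq_card => T; rewrite !inE key.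
pose X (i : nat) := #|[pred T : {ffun 'I_n -> 'I_M * 'I_M} | sytF (remove_cell la i) n (view T)]|.
transitivity (\sum_(x : 'I_M) \sum_(y : 'I_M)
   (if [&& (nat_of_ord x) < size la, removable la x & (nat_of_ord y).+1 == nth 0 la x]
    then X x else 0)).
  rewrite pair_bigA /=; apply: eq_bigr => -[x y] _ /=.
  case: ifP => [/and3P [-> -> ->] //|hf].
  apply: eq_card0 => T; rewrite !inE; apply/negbTE.
  by apply/negP => /and4P [h1 h2 h3 _]; move: hf; rewrite h1 h2 h3.
transitivity (\sum_(x : 'I_M) (if (nat_of_ord x < size la) && removable la x then X x else 0)).
  apply: eq_bigr => x _; case: ifP => [/andP [hx hr]|hf]; last first.
    by apply: big1 => y _; rewrite (_ : [&& _, _ & _] = false) //; apply/negbTE;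
       apply/negP => /and3P [h1 h2 _]; move: hf; rewrite h1 h2.
  have hpos := part_nth_pos hp hx.
  have hy : (nth 0 la x).-1 < M.
    apply: leq_ltn_trans (leq_pred _) _; apply: leq_ltn_trans (nth_le_head _ hp) _.
    have : 0 < size la by apply: leq_ltn_trans hx. rewrite /M; lia.
  rewrite (bigD1 (Ordinal hy)) //=.
  rewrite ifT; last by apply/and3P; split => //; rewrite prednK.
  rewrite big1 ?addn0 // => y hy'; rewrite ifF //.
  apply/negP => /and3P [_ _ /eqP e]; move: hy'; rewrite (_ : y = Ordinal hy) ?eqxx //.
  by apply: val_inj => /=; rewrite -e.
rewrite -big_mkcond /=.
transitivity (\sum_(i < size la | removable la i) X i).
  rewrite (big_ord_widen_cond _ (fun i => removable la i) X hMa).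
  by apply: eq_bigl => i; rewrite andbC.
apply: eq_bigr => i hr.
rewrite /X (num_SYT_M (remove_part hr) (leq_trans (size_remove_le (ltn_ord i)) hMa)
             (leq_trans (head_remove_le hr) hMb)).
by rewrite psize_remove // hP.
Qed.

Local Open Scope ring_scope.

Section Alg.
Variable R : fieldType.

Lemma deriv1P : (1 : {poly R})^`() = 0.
Proof. by rewrite -polyC1 derivC. Qed.

Lemma deriv_prod_ord n (f : 'I_n -> {poly R}) :
  (\prod_(i < n) f i)^`() =
  \sum_(k < n) \prod_(i < n) (if i == k then (f i)^`() else f i).
Proof.
elim: n f => [|n IH] f; first by rewrite !big_ord0 deriv1P.
rewrite big_ord_recr /= derivM IH big_distrl /= [in RHS]big_ord_recr /=.
congr (_ + _).
  apply: eq_bigr => k _; rewrite big_ord_recr /=.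
  have -> : (@ord_max n == widen_ord (leqnSn n) k) = false.
    apply/negbTE; apply/eqP => /(f_equal (@nat_of_ord _)) /= h.
    by move: (ltn_ord k); rewrite -h ltnn.
  by congr (_ * _).
rewrite big_ord_recr /= eqxx; congr (_ * _); apply: eq_bigr => i _.
have -> : (widen_ord (leqnSn n) i == ord_max) = false.
  apply/negbTE; apply/eqP => /(f_equal (@nat_of_ord _)) /= h.
  by move: (ltn_ord i); rewrite h ltnn.
by [].
Qed.

Lemma deriv_det n (M : 'M[{poly R}]_n) :
  (\det M)^`() =
  \sum_(j < n) \det (\matrix_(i, k) if k == j then (M i k)^`() else M i k).
Proof.
rewrite /determinant raddf_sum /=.
rewrite exchange_big /=; apply: eq_bigr => s _.
rewrite derivM.
have e : forall b : bool, ((-1) ^+ b : {poly R})^`() = 0.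
  by case; rewrite /= ?expr1 ?expr0 ?derivN deriv1P ?oppr0.
rewrite e.
rewrite mul0r add0r -mulr_sumr; congr (_ * _).
rewrite deriv_prod_ord [in RHS](reindex_inj (@perm_inj _ s)) /=.
apply: eq_bigr => k _; apply: eq_bigr => i _; rewrite mxE (inj_eq (@perm_inj _ s)).
by case: eqP => // ->.
Qed.

Definition Wm (A : nat -> {poly R}) r (n : nat -> nat) : 'M[{poly R}]_r :=
  \matrix_(i < r, j < r) (A (n j))^`(i).
Definition Wr (A : nat -> {poly R}) r n := \det (Wm A r n).
Definition Dl r (n : nat -> nat) : R :=
  \prod_(i < r) \prod_(j < r | (i < j)%N) ((n j)%:R - (n i)%:R).
Definition decf (n : nat -> nat) j := fun k => if k == j then (n k).-1 else n k.

Lemma appell_deriv (A : nat -> {poly R}) m : is_Appell A -> (A m)^`() = m%:R *: A m.-1.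
Proof.
case=> h0 hS; case: m => [|m]; last exact: hS.
by rewrite h0 deriv1P scale0r.
Qed.

Lemma appell_derivn (A : nat -> {poly R}) m i : is_Appell A -> ((A m)^`(i))^`() = m%:R *: (A m.-1)^`(i).
Proof. by move=> hA; rewrite -derivnS derivSn (appell_deriv _ hA) derivnZ. Qed.

Lemma det_scale_col r (M : 'M[{poly R}]_r) j c :
  \det (\matrix_(i, k) (if k == j then c *: M i k else M i k)) = c *: \det M.
Proof.
pose d := \row_(k < r) (if k == j then c%:P else 1).
have -> : (\matrix_(i, k) (if k == j then c *: M i k else M i k)) = M *m diag_mx d.
  apply/matrixP => i k; rewrite mul_mx_diag !mxE.
  by case: eqP => _; rewrite ?mulr1 // mulrC mul_polyC.
rewrite det_mulmx det_diag (bigD1 j) //= big1 => [|k hk]; last by rewrite mxE (negbTE hk).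
by rewrite !mxE eqxx mulr1 mulrC mul_polyC.
Qed.

Lemma deriv_W (A : nat -> {poly R}) r n : is_Appell A ->
  (Wr A r n)^`() = \sum_(j < r) (n j)%:R *: Wr A r (decf n j).
Proof.
move=> hA; rewrite /Wr deriv_det; apply: eq_bigr => j _.
rewrite -(det_scale_col _ j); congr (\det _); apply/matrixP => i k; rewrite !mxE /decf.
case: eqP => [->|ne]; first by rewrite eqxx (appell_derivn _ _ hA).
by have -> : (nat_of_ord k == nat_of_ord j) = false by apply/negbTE/eqP => /val_inj.
Qed.

End Alg.

Section Mono.
Variable R : fieldType.

Lemma ffact_natr m i : ((m ^_ i)%:R : R) = \prod_(t <- iota 0 i) (m%:R - t%:R).
Proof.
elim: i => [|i IH]; first by rewrite ffactn0 big_nil.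
rewrite ffactnSr natrM -addn1 iotaD big_cat big_seq1 /= add0n -IH.
case: (leqP i m) => h; first by rewrite natrB.
by rewrite ffact_small // !mul0r.
Qed.

Definition Pf i : {poly R} := \prod_(t <- iota 0 i) ('X - (t%:R : R)%:P).

Lemma size_Pf i : size (Pf i) = i.+1.
Proof. by rewrite /Pf size_prod_XsubC size_iota. Qed.

Lemma Pf_eval i x : (Pf i).[x] = \prod_(t <- iota 0 i) (x - t%:R).
Proof. by rewrite /Pf horner_prod; apply: eq_bigr => t _; rewrite hornerXsubC. Qed.

Lemma det_ffact r (n : nat -> nat) :
  \det (\matrix_(i < r, j < r) (((n j) ^_ i)%:R : R)) = Dl R r n.
Proof.
pose L := \matrix_(i < r, k < r) (Pf i)`_k.
pose V := Vandermonde r (\row_(j < r) ((n j)%:R : R)).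
have -> : \matrix_(i < r, j < r) (((n j) ^_ i)%:R : R) = L *m V.
  apply/matrixP => i j; rewrite !mxE ffact_natr -Pf_eval.
  rewrite (horner_coef_wide _ (_ : (size (Pf i) <= r)%N)); last by rewrite size_Pf.
  by apply: eq_bigr => k _; rewrite !mxE.
rewrite det_mulmx det_Vandermonde det_trig; last first.
  apply/is_trig_mxP => i k hik; rewrite mxE nth_default // size_Pf.
  exact: hik.
rewrite big1 ?mul1r => [|i _]; last first.
  rewrite mxE; have := lead_coef_prod_XsubC (iota 0 i) predT (fun t => (t%:R : R)).
  by rewrite lead_coefE size_prod_XsubC size_iota /= => <-.
by apply: eq_bigr => i _; apply: eq_bigr => j _; rewrite !mxE.
Qed.

Lemma Xn_appell : is_Appell (fun m => ('X^m : {poly R})).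
Proof. by split => // m; rewrite derivXn scaler_nat. Qed.

Lemma W_monomial r n :
  'X^(\sum_(i < r) i) * Wr (fun m => ('X^m : {poly R})) r n =
  (Dl R r n)%:P * 'X^(\sum_(j < r) n j).
Proof.
pose Dg := diag_mx (\row_(i < r) ('X^i : {poly R})).
pose F := \matrix_(i < r, j < r) (((n j) ^_ i)%:R : R).
pose Dn := diag_mx (\row_(j < r) ('X^(n j) : {poly R})).
have e : Dg *m Wm (fun m => ('X^m : {poly R})) r n = map_mx polyC F *m Dn.
  apply/matrixP => i j; rewrite mul_diag_mx mul_mx_diag !mxE derivnXn.
  case: (leqP i (n j)) => h.
    by rewrite mulrnAr -exprD subnKC // polyC_natr mulr_natl.
  by rewrite ffact_small // mulr0n mulr0 polyC0 mul0r.
have := congr1 determinant e; rewrite !det_mulmx !det_diag det_map_mx.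
rewrite -/(Wr _ _ _) -det_ffact.
have e1 : \prod_(i < r) (\row_(i < r) ('X^i : {poly R})) 0 i = 'X^(\sum_(i < r) i).
  by rewrite -prodrXr; apply: eq_bigr => i _; rewrite mxE.
have e2 : \prod_(j < r) (\row_(j < r) ('X^(n j) : {poly R})) 0 j = 'X^(\sum_(j < r) n j).
  by rewrite -prodrXr; apply: eq_bigr => i _; rewrite mxE.
by rewrite e1 e2 => ->.
Qed.

End Mono.

Section Ident.
Variable R : fieldType.

Lemma Xderiv m : 'X * ('X^m : {poly R})^`() = m%:R *: 'X^m.
Proof.
case: m => [|m]; first by rewrite expr0 deriv1P mulr0 scale0r.
by rewrite derivXn /= mulrnAr -exprS scaler_nat.
Qed.

Lemma sum_decf r (n : nat -> nat) (j : 'I_r) : (0 < n j)%N ->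
  \sum_(k < r) decf n j k = (\sum_(k < r) n k).-1.
Proof.
move=> hj; rewrite (bigD1 j) //= [in RHS](bigD1 j) //= {1}/decf eqxx.
rewrite (eq_bigr (fun k : 'I_r => n k)) => [|k hk]; last first.
  by rewrite /decf (_ : (nat_of_ord k == nat_of_ord j) = false) //; apply/negbTE.
by case: (n j) hj.
Qed.

Lemma identI r (n : nat -> nat) : (forall j, (j < r)%N -> (0 < n j)%N) ->
  \sum_(j < r) (n j)%:R * Dl R r (decf n j) =
  ((\sum_(j < r) n j)%:R - ((\sum_(i < r) i)%N)%:R) * Dl R r n.
Proof.
move=> hpos.
case: r hpos => [|r] hpos; first by rewrite !big_ord0 subrr mul0r.
set N := \sum_(j < r.+1) n j; set C := (\sum_(i < r.+1) i)%N.
set Wx := Wr (fun m => ('X^m : {poly R})) r.+1.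
have hN : (0 < N)%N by rewrite /N big_ord_recl; apply: leq_trans (hpos 0 (ltn0Sn _)) (leq_addr _ _).
have hX : 'X * 'X^(N.-1) = ('X^N : {poly R}) by rewrite -exprS prednK.
have E1 : 'X^C * Wx n = (Dl R r.+1 n)%:P * 'X^N by exact: (W_monomial R r.+1 n).
have E2 : forall j : 'I_r.+1, 'X^C * Wx (decf n j) = (Dl R r.+1 (decf n j))%:P * 'X^(N.-1).
  by move=> j; rewrite /Wx (W_monomial R) sum_decf // hpos.
have sa : 'X * ('X^C * Wx n)^`() = (N%:R * Dl R r.+1 n) *: 'X^N.
  rewrite E1 deriv_mulC derivXn mul_polyC -scalerAr mulrnAr hX -scaler_nat scalerA.
  by rewrite mulrC.
have sb : 'X * ('X^C * Wx n)^`() = (C%:R * Dl R r.+1 n) *: 'X^N +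
    (\sum_(j < r.+1) (n j)%:R * Dl R r.+1 (decf n j)) *: 'X^N.
  rewrite derivM mulrDr (deriv_W _ _ (Xn_appell R)) mulrA Xderiv -scalerAl E1.
  rewrite mul_polyC scalerA; congr (_ + _).
  rewrite !mulr_sumr scaler_suml; apply: eq_bigr => j _.
  rewrite -!scalerAr E2 mul_polyC -scalerAr hX scalerA //.
have := congr1 (fun p : {poly R} => p`_N) (etrans (esym sa) sb).
rewrite /= coefD !coefZ coefXn eqxx !mulr1 => h.
rewrite mulrBl h; ring.
Qed.

End Ident.

Section Bridge.
Variable R : fieldType.
Hypothesis charR0 : [pchar R] =i pred0.

Lemma natr_neq0 x : (0 < x)%N -> (x%:R : R) != 0.
Proof. by move=> hx; rewrite (proj1 (pcharf0P R) charR0) -lt0n. Qed.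

Lemma fact_neq0 x : ((x`!)%:R : R) != 0.
Proof. exact/natr_neq0/fact_gt0. Qed.

Lemma Dl_neq0 r m : (forall i j, (i < j)%N -> (j < r)%N -> (m i < m j)%N) -> Dl R r m != 0.
Proof.
move=> hm; apply/prodf_neq0 => i _; apply/prodf_neq0 => j hij.
have h := hm i j hij (ltn_ord j).
by rewrite -natrB ?(ltnW h) // natr_neq0 // subn_gt0.
Qed.

Lemma Dl_eq0 r m j1 j2 : (j1 < j2)%N -> (j2 < r)%N -> m j1 = m j2 -> Dl R r m = 0.
Proof.
move=> h12 h2 e; have h1 : (j1 < r)%N by apply: ltn_trans h2.
rewrite /Dl (bigD1 (Ordinal h1)) //= (bigD1 (Ordinal h2)) //= e subrr.
by rewrite !mul0r.
Qed.

Lemma Wr_eq0 (A : nat -> {poly R}) r m j1 j2 :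
  (j1 < j2)%N -> (j2 < r)%N -> m j1 = m j2 -> Wr A r m = 0.
Proof.
move=> h12 h2 e; have h1 : (j1 < r)%N by apply: ltn_trans h2.
rewrite /Wr -det_tr; apply: (@determinant_alternate _ _ _ (Ordinal h1) (Ordinal h2)).
  by apply/eqP => /(f_equal (@nat_of_ord _)) /= h; rewrite h ltnn in h12.
by move=> k; rewrite !mxE /= e.
Qed.

Lemma Dl_shift s m : (forall k, (k < s)%N -> (0 < m k.+1)%N) -> m 0%N = 0%N ->
  Dl R s.+1 m = (\prod_(k < s) (m k.+1)%:R) * Dl R s (fun k => (m k.+1).-1).
Proof.
move=> hpos h0; rewrite /Dl big_ord_recl /=; congr (_ * _).
  rewrite big_mkcond big_ord_recl /= mul1r.
  by apply: eq_bigr => j _; rewrite h0 subr0.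
apply: eq_bigr => i _; rewrite big_mkcond big_ord_recl /= mul1r [in RHS]big_mkcond.
apply: eq_bigr => j _; rewrite /bump /= !add1n ltnS; case: ifP => // _.
have hj := hpos j (ltn_ord j); have hi := hpos i (ltn_ord i).
by case: (m j.+1) hj => // a _; case: (m i.+1) hi => // b _ /=; rewrite !mulrS; ring.
Qed.

Lemma Wr_shift (A : nat -> {poly R}) s m : is_Appell A -> m 0%N = 0%N ->
  Wr A s.+1 m = (\prod_(k < s) (m k.+1)%:R) *: Wr A s (fun k => (m k.+1).-1).
Proof.
move=> hA h0; rewrite /Wr (expand_det_col _ ord0) big_ord_recl /=.
rewrite big1 ?addr0 => [|i _]; last first.
  by rewrite mxE h0 hA.1 -polyC1 derivnC lift0 /= mul0r.
rewrite mxE h0 hA.1 derivn0 mul1r /cofactor /= expr0 mul1r.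
pose d := \row_(k < s) (((m k.+1)%:R : R)%:P).
have -> : row' ord0 (col' ord0 (Wm A s.+1 m)) = Wm A s (fun k => (m k.+1).-1) *m diag_mx d.
  apply/matrixP => i k; rewrite mul_mx_diag !mxE !lift0 derivSn (appell_deriv _ hA) /=.
  by rewrite derivnZ mulrC mul_polyC.
rewrite det_mulmx det_diag.
rewrite (eq_bigr (fun k : 'I_s => ((m k.+1)%:R : R)%:P)) => [|k _]; last by rewrite mxE.
by rewrite -rmorph_prod mulrC mul_polyC.
Qed.

End Bridge.
Local Close Scope ring_scope.

Lemma sum_nth s : (\sum_(j < size s) nth 0 s j)%N = sumn s.
Proof.
elim: s => [|a s IH]; first by rewrite big_ord0.
by rewrite /= big_ord_recl /= IH.
Qed.

Lemma nseq_lt la i j : is_partition la -> (i < j)%N -> (j < size la)%N ->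
  (nseq_of la i < nseq_of la j)%N.
Proof.
move=> hp hij hj; rewrite /nseq_of.
have hle : (size la - 1 - j <= size la - 1 - i)%N by lia.
have := part_nth_le hp hle; lia.
Qed.

Lemma nseq_pos la j : is_partition la -> (j < size la)%N -> (0 < nseq_of la j)%N.
Proof.
move=> hp hj; rewrite /nseq_of.
have hle : (size la - 1 - j < size la)%N by lia.
have := part_nth_pos hp hle; lia.
Qed.

Lemma psize_nseq la :
  (\sum_(j < size la) nseq_of la j)%N = (psize la + \sum_(j < size la) j)%N.
Proof.
rewrite /nseq_of big_split /=; congr (_ + _)%N.
rewrite /psize -sum_nth (reindex_inj rev_ord_inj) /=; apply: eq_bigr => j _.
by congr nth; have := ltn_ord j; lia.
Qed.

Lemma caseA la i : is_partition la -> (i < size la)%N -> removable la i ->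
  (1 < nth 0 la i)%N ->
  size (remove_cell la i) = size la /\
  forall k, (k < size la)%N ->
    decf (nseq_of la) (size la - i.+1)%N k = nseq_of (remove_cell la i) k.
Proof.
move=> hp hi hr h1.
have hall : all (fun x => 0 < x)%N (dec_row la i).
  apply/(all_nthP 0) => x; rewrite size_dec // nth_dec => hx.
  by case: eqP => [_|_]; [rewrite -ltnS prednK // ltnW | apply: part_nth_pos].
have hmu : remove_cell la i = dec_row la i by rewrite /remove_cell; apply/all_filterP.
have hs : size (remove_cell la i) = size la by rewrite hmu size_dec.
split => // k hk; rewrite /nseq_of hs nth_remove // /decf.
case: (eqVneq k (size la - i.+1)) => [->|hki].
  have -> : (size la - 1 - (size la - i.+1) = i)%N by lia.
  by rewrite eqxx; lia.
rewrite (_ : (size la - 1 - k == i) = false); last by apply/negbTE/eqP; lia.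
by [].
Qed.

Lemma caseB la i : is_partition la -> (i < size la)%N -> removable la i ->
  nth 0 la i = 1%N ->
  [/\ size la = i.+1, size (remove_cell la i) = i,
      decf (nseq_of la) (size la - i.+1)%N 0 = 0%N &
      forall k, (k < i)%N ->
        decf (nseq_of la) (size la - i.+1)%N k.+1 = (nseq_of (remove_cell la i) k).+1].
Proof.
move=> hp hi hr h1.
have hsz : size la = i.+1.
  rewrite removableE // h1 ltnS leqn0 in hr.
  apply/eqP; rewrite eqn_leq hi andbT leqNgt; apply/negP => h.
  by have := part_nth_pos hp h; rewrite (eqP hr).
have hmp := remove_part hr.
have hsm : size (remove_cell la i) = i.
  apply/eqP; rewrite eqn_leq; apply/andP; split.
    rewrite leqNgt; apply/negP => h.
    by have := part_nth_pos hmp h; rewrite nth_remove // eqxx h1.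
  case: i hi hr h1 hsz {hmp} => // i hi hr h1 hsz.
  rewrite ltnNge; apply/negP => h.
  have := nth_default 0 h; rewrite nth_remove // (_ : (i == i.+1) = false); last first.
    by apply/negbTE; rewrite neq_ltn ltnSn.
  move=> e; have hil : (i < size la)%N by rewrite hsz; lia.
  by have := part_nth_pos hp hil; rewrite e.
split => //.
  by rewrite /decf /nseq_of hsz subnn eqxx subn0 subn1 /= addn0 h1.
move=> k hk; rewrite /decf /nseq_of hsz hsm subnn nth_remove //.
rewrite (_ : (i - 1 - k == i) = false); last by apply/negbTE/eqP; lia.
rewrite (_ : (i.+1 - 1 - k.+1 = i - 1 - k)%N); last by lia.
by rewrite addnS.
Qed.

Lemma nonrem_eq la i : is_partition la -> (i < size la)%N -> ~~ removable la i ->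
  (0 < size la - i.+1)%N /\
  decf (nseq_of la) (size la - i.+1) (size la - i.+1).-1 =
  decf (nseq_of la) (size la - i.+1) (size la - i.+1).
Proof.
move=> hp hi; rewrite removableE // -leqNgt => hle.
have hpos := part_nth_pos hp hi.
have hi1 : (i.+1 < size la)%N.
  by rewrite ltnNge; apply/negP => h; have := nth_default 0 h; lia.
have hge := part_nth_le hp (leqnSn i).
split; first by lia.
rewrite /decf eqxx (_ : ((size la - i.+1).-1 == size la - i.+1) = false); last first.
  by apply/negbTE/eqP; lia.
rewrite /nseq_of.
have -> : (size la - 1 - (size la - i.+1).-1 = i.+1)%N by lia.
have -> : (size la - 1 - (size la - i.+1) = i)%N by lia.
lia.
Qed.

Lemma prod_fact_decf r (n : nat -> nat) (j : 'I_r) : (0 < n j)%N ->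
  (\prod_(k < r) (n k)`! = n j * \prod_(k < r) (decf n j k)`!)%N.
Proof.
move=> hj; rewrite (bigD1 j) //= [in RHS](bigD1 j) //= {1}/decf eqxx.
rewrite [in RHS](eq_bigr (fun k : 'I_r => (n k)`!)) => [|k hk]; last first.
  by rewrite /decf (_ : (nat_of_ord k == nat_of_ord j) = false) //; apply/negbTE.
by case: (n j) hj => // m _; rewrite factS /= mulnA.
Qed.

Local Open Scope ring_scope.

Section Main.
Variable R : fieldType.
Hypothesis charR0 : [pchar R] =i pred0.

Lemma Dl_ext r m m' : (forall k, (k < r)%N -> m k = m' k) -> Dl R r m = Dl R r m'.
Proof.
by move=> e; apply: eq_bigr => i _; apply: eq_bigr => j _; rewrite !e.
Qed.

Lemma Wr_ext (A : nat -> {poly R}) r m m' :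
  (forall k, (k < r)%N -> m k = m' k) -> Wr A r m = Wr A r m'.
Proof. by move=> e; rewrite /Wr; congr (\det _); apply/matrixP => i j; rewrite !mxE e. Qed.

Lemma transfer (A : nat -> {poly R}) la i : is_Appell A -> is_partition la ->
  (i < size la)%N -> removable la i ->
  exists c : R, [/\ c != 0,
    Dl R (size la) (decf (nseq_of la) (size la - i.+1)%N) =
      c * Dl R (size (remove_cell la i)) (nseq_of (remove_cell la i)),
    Wr A (size la) (decf (nseq_of la) (size la - i.+1)%N) =
      c *: Wr A (size (remove_cell la i)) (nseq_of (remove_cell la i)) &
    (((\prod_(k < size la) (decf (nseq_of la) (size la - i.+1)%N k)`!)%N)%:R : R) =
      c * ((\prod_(k < size (remove_cell la i)) (nseq_of (remove_cell la i) k)`!)%N)%:R].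
Proof.
move=> hA hp hi hr.
have hpos := part_nth_pos hp hi.
case: (ltnP 1%N (nth 0%N la i)) => h1.
  have [hs he] := caseA hp hi hr h1.
  exists 1; rewrite hs oner_eq0 !mul1r scale1r; split => //.
  - exact: Dl_ext.
  - exact: Wr_ext.
  - by congr (_%:R); apply: eq_bigr => k _; rewrite he.
have h1' : nth 0%N la i = 1%N by lia.
have [hsz hsm h0 hS] := caseB hp hi hr h1'.
set m := decf (nseq_of la) (size la - i.+1)%N in h0 hS *.
rewrite hsz hsm.
have mpos : forall k, (k < i)%N -> (0 < m k.+1)%N by move=> k hk; rewrite hS.
exists (\prod_(k < i) (m k.+1)%:R); split.
- by apply/prodf_neq0 => k _; apply: natr_neq0 => //; apply: mpos.
- rewrite (@Dl_shift R i m mpos h0); congr (_ * _); apply: Dl_ext => k hk.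
  by rewrite hS.
- rewrite (@Wr_shift R A i m hA h0); congr (_ *: _); apply: Wr_ext => k hk.
  by rewrite hS.
- rewrite big_ord_recl h0 fact0 mul1n -natr_prod -natrM; congr (_%:R).
  rewrite -big_split /=; apply: eq_bigr => k _.
  by rewrite /bump leq0n add1n hS // factS.
Qed.

Lemma hook la : is_partition la ->
  (num_SYT la)%:R * (((\prod_(k < size la) (nseq_of la k)`!)%N)%:R : R) =
  ((psize la)`!)%:R * Dl R (size la) (nseq_of la).
Proof.
suff H : forall P la, (psize la < P)%N -> is_partition la ->
  (num_SYT la)%:R * (((\prod_(k < size la) (nseq_of la k)`!)%N)%:R : R) =
  ((psize la)`!)%:R * Dl R (size la) (nseq_of la).
  by move=> hp; apply: (H (psize la).+1).
clear la; elim => [//|P IH] la hP hp.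
case: (eqVneq la [::]) => [->|hne].
  by rewrite num_SYT_nil /psize /= /Dl !big_ord0.
have hPpos := psize_pos hp hne.
have hA := Xn_appell R.
rewrite (num_SYT_branch hp hne) natr_sum mulr_suml.
rewrite (reindex_inj rev_ord_inj) /=.
transitivity (\sum_(j < size la) (((psize la).-1)`!)%:R *
   ((nseq_of la j)%:R * Dl R (size la) (decf (nseq_of la) j))).
  rewrite big_mkcond; apply: eq_bigr => j _.
  have hj : (size la - j.+1 < size la)%N by have := ltn_ord j; lia.
  have ej : (size la - (size la - j.+1).+1)%N = j by have := ltn_ord j; lia.
  case: ifP => hrem.
    have [c [hc eD eW eF]] := transfer hA hp hj hrem.
    rewrite ej in eD eF.
    set mu := remove_cell la (size la - j.+1) in eD eF *.
    have hmu : is_partition mu by apply: remove_part.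
    have hpmu : psize mu = (psize la).-1 by apply: psize_remove.
    have hlt : (psize mu < P)%N by rewrite hpmu; lia.
    have IHmu := IH mu hlt hmu.
    rewrite hpmu in IHmu.
    rewrite (@prod_fact_decf _ _ j (nseq_pos hp (ltn_ord j))) natrM eF eD.
    transitivity ((nseq_of la j)%:R * c *
      ((num_SYT mu)%:R * ((\prod_(k < size mu) (nseq_of mu k)`!)%N)%:R)).
      by rewrite mulrCA -mulrA; congr (_ * _); rewrite mulrCA.
    by rewrite IHmu mulrCA -mulrA.
  have [hj0 e] := nonrem_eq hp hj (negbT hrem).
  rewrite ej in hj0 e.
  rewrite (Dl_eq0 _ (_ : (j.-1 < j)%N) (ltn_ord j) e) ?mulr0 //.
  by rewrite prednK.
rewrite -mulr_sumr identI; last by move=> j hj; apply: nseq_pos.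
rewrite psize_nseq natrD addrK.
by case: (psize la) hPpos => // p _; rewrite factS natrM /=; ring.
Qed.

End Main.

Lemma prod_fact_neq0 (R : fieldType) (charR0 : [pchar R] =i pred0) r (f : nat -> nat) :
  ((\prod_(k < r) (f k)`!)%N%:R : R) != 0.
Proof. by apply: natr_neq0 => //; apply: prodn_gt0 => k; apply: fact_gt0. Qed.

Unset Implicit Arguments.

Theorem theorem5p1 (R : fieldType) (A : nat -> {poly R})
  (charR0 : [pchar R] =i pred0) (hA : is_Appell A)
  (la : seq nat) (hla : is_partition la) :
  (num_SYT la)%:R *: (wr_appell A la)^`() =
  (psize la)%:R *:
    \sum_(i < size la | removable la i)
       (num_SYT (remove_cell la i))%:R *: wr_appell A (remove_cell la i).
Proof.
have eqA : forall mu, wr_appell A mu =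
    (Dl R (size mu) (nseq_of mu))^-1 *: Wr A (size mu) (nseq_of mu) by [].
case: (eqVneq la [::]) => [->|hne].
  by rewrite /psize /= scale0r eqA /Dl /Wr !big_ord0 det_mx00 invr1 scale1r deriv1P scaler0.
have hPpos := psize_pos hla hne.
have hD : Dl R (size la) (nseq_of la) != 0.
  by apply: Dl_neq0 => // i j h1 h2; apply: nseq_lt.
have hl := hook charR0 hla.
rewrite eqA derivZ (deriv_W _ _ hA) !scaler_sumr.
rewrite [in RHS](reindex_inj rev_ord_inj) /= [in RHS]big_mkcond.
apply: eq_bigr => j _.
have hj : (size la - j.+1 < size la)%N by have := ltn_ord j; lia.
have ej : (size la - (size la - j.+1).+1)%N = j by have := ltn_ord j; lia.
case: ifP => hrem; last first.
  have [hj0 e] := nonrem_eq hla hj (negbT hrem).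
  rewrite ej in hj0 e.
  have hjj : (j.-1 < j)%N by rewrite ltn_predL.
  by rewrite (@Wr_eq0 R A (size la) (decf (nseq_of la) j) j.-1 j hjj (ltn_ord j) e) !scaler0.
have [c [hc eD eW eF]] := transfer charR0 hA hla hj hrem.
rewrite ej in eD eW eF.
set mu := remove_cell la (size la - j.+1) in eD eW eF *.
have hmu : is_partition mu by apply: remove_part.
have hpmu : psize mu = (psize la).-1 by apply: psize_remove.
have hlm := hook charR0 hmu; rewrite hpmu in hlm.
have hDm : Dl R (size mu) (nseq_of mu) != 0.
  by apply: Dl_neq0 => // i k h1 h2; apply: nseq_lt.
have hnj : ((nseq_of la j)%:R : R) != 0 by apply: natr_neq0 => //; apply: nseq_pos.
have hQ := prod_fact_neq0 charR0 (size mu) (nseq_of mu).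
rewrite eqA eW !scalerA; congr (_ *: _).
rewrite (@prod_fact_decf _ _ j (nseq_pos hla (ltn_ord j))) natrM eF in hl.
set Q := ((\prod_(k < size mu) (nseq_of mu k)`!)%N%:R : R) in hl hlm hQ.
set F := ((num_SYT la)%:R : R) in hl *.
set Fm := ((num_SYT mu)%:R : R) in hlm *.
have hF : F = ((psize la)`!)%:R * Dl R (size la) (nseq_of la) /
              ((nseq_of la j)%:R * (c * Q)).
  by rewrite -hl mulfK // !mulf_neq0.
have hFm : Fm = (((psize la).-1)`!)%:R * Dl R (size mu) (nseq_of mu) / Q.
  by rewrite -hlm mulfK.
rewrite hF hFm.
case: (psize la) hPpos => // p _; rewrite factS natrM /=.
field.
by rewrite hD hnj hc hQ hDm.
Qed.
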